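(* The graph property $\mathsf{NON\text{-}3\text{-}COLORABLE}$ (the complement of $3\text{-}\mathsf{COLORABLE}$) does not belong to $\mathrm{NLP}$.
   Context: Graphs. All graphs are finite, nonempty, simple, undirected and connected, and labeled: a graph is a triple $G=(V(G),E(G),\lambda_G)$ with labeling $\lambda_G:V(G)\to\{0,1\}^*$. $\mathsf{GRAPH}$ is the set of all graphs. A graph property is a subset of $\mathsf{GRAPH}$ closed under label-preserving isomorphism. $N^G_r(u)$ denotes the subgraph of $G$ induced by the nodes at distance at most $r$ from $u$. $3\text{-}\mathsf{COLORABLE}$ is the set of graphs $G$ admitting $f:V(G)\to\{0,1,2\}$ with $f(u)\ne f(v)$ for every edge $\{u,v\}$ (labels irrelevant), and $\mathsf{NON\text{-}3\text{-}COLORABLE}=\mathsf{GRAPH}\setminus3\text{-}\mathsf{COLORABLE}$. Identifiers and certificates. An identifier assignment of $G$ is a map $\mathrm{id}:V(G)\to\{0,1\}^*$; it is $r$-locally unique if $\mathrm{id}(u)\neq\mathrm{id}(v)$ for all distinct nodes $u,v$ at distance at most $2r$. Identifiers are ordered lexicographically (a proper prefix is smaller). A certificate assignment is a map $\kappa:V(G)\to\{0,1\}^*$; for $r\in\mathbb N$ and $p:\mathbb N\to\mathbb N$ it is $(r,p)$-bounded (w.r.t. $(G,\mathrm{id})$) if $|\kappa(u)|\le p\big(\sum_{v\in N^G_r(u)}(1+|\lambda_G(v)|+|\mathrm{id}(v)|)\big)$ for every node $u$. Distributed Turing machines. Such a machine $M$ is a Turing machine with three one-way-infinite tapes (receiving,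 internal, sending) over the alphabet $\{\vdash,\square,\#,0,1\}$ (left-end marker, blank, separator, bits), with designated states start, pause, stop. It is executed on a graph $G$ under an (at least $1$-locally unique) identifier assignment $\mathrm{id}$ and a certificate assignment $\kappa$: every node runs its own copy of $M$ in synchronous rounds. In each round, a node $u$ whose neighbors are $v_1,\dots,v_d$ in increasing identifier order (i) gets $m_1\#\cdots\#m_d\#$ on its receiving tape, where $m_i$ is the message sent to it by $v_i$ in the previous round (empty in the first round); (ii) its sending tape is emptied, its internal tape is initialized to $\lambda_G(u)\#\mathrm{id}(u)\#\kappa(u)$ in the first round and otherwise keeps its content, and, unless $u$ reached stop in an earlier round, $M$ runs from state start with all heads leftmost until it enters pause or stop; (iii) $u$ sends to $v_i$ the $i$-th $\#$-separated bit string on its sending tape (the empty string if there is none). The execution terminates once all nodes are in stop; $G$ is accepted, written $M(G,\mathrm{id},\kappa)\equiv\mathrm{accept}$, if at that point every node has exactly the bit string $1$ on its internal tape (symbols other than $0,1$ ignored). A local-polynomial machine is a distributed Turing machine for which there are a constant $c$ and a polynomial $q$ such that, on every graph and under all identifier and certificate assignments, all nodes reach stop within $c$ rounds, and in every round every node makes at most $q(n)$ computation steps, $n$ being the total length of its receiving- and internal-tape contents at the beginning of the round. $\mathrm{NLP}$ is the class of graph properties $P$ for which there exist a local-polynomial machine $M$, constants $r_{\mathrm{id}},r\ge 1$ and a polynomial $p$ such that for every graph $G$ and every $r_{\mathrm{id}}$-locally unique identifier assignment $\mathrm{id}$ of $G$: $G\in P\iff\exists\kappa\,:\,M(G,\mathrm{id},\kappa)\equiv\mathrm{accept}$,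 $\kappa$ ranging over $(r,p)$-bounded certificate assignments of $(G,\mathrm{id})$. *)

(* Defs.v *)
From HB Require Import structures.
From mathcomp Require Import all_boot.
Set Implicit Arguments. Unset Strict Implicit. Unset Printing Implicit Defensive.

(* Vertices are 'I_n (every finite graph is isomorphic to such one).   *)
Record graph := Graph {
  gn : nat;
  gadj : rel 'I_gn;
  glab : 'I_gn -> seq bool;
  gn_pos : 0 < gn;
  gadj_sym : symmetric gadj;
  gadj_irr : irreflexive gadj;
  gconn : forall u v : 'I_gn, connect gadj u v }.

Fixpoint within (G : graph) (k : nat) (u v : 'I_(gn G)) : bool :=
  if k is k'.+1 then (u == v) || [exists w, @gadj G u w && within k' w v]
  else u == v.
Arguments within : clear implicits.

Definition three_colorable (G : graph) : Prop :=
  exists f : 'I_(gn G) -> 'I_3, forall u v, @gadj G u v -> f u != f v.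

Definition locally_unique (G : graph) (r : nat) (idf : 'I_(gn G) -> seq bool) :=
  forall u v : 'I_(gn G), u != v -> within G (2 * r) u v -> idf u != idf v.

Arguments locally_unique : clear implicits.

Fixpoint lexle (s t : seq bool) : bool :=
  match s, t with
  | [::], _ => true
  | _ :: _, [::] => false
  | a :: s', b :: t' => (~~ a && b) || ((a == b) && lexle s' t')
  end.

(* polynomials N -> N, given by their (natural) coefficient list, low degree first *)
Definition peval (p : seq nat) (x : nat) : nat := foldr (fun a acc => a + x * acc) 0 p.

Definition bounded (G : graph) (idf : 'I_(gn G) -> seq bool) (r : nat) (p : seq nat)
    (kap : 'I_(gn G) -> seq bool) : Prop :=
  forall u : 'I_(gn G),
    size (kap u) <= peval p (\sum_(v | within G r u v) (1 + size (@glab G v) + size (idf v))).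

Arguments bounded : clear implicits.

Inductive sym := SLend | SBlank | SSep | S0 | S1.

Definition sym_eqb (a b : sym) : bool :=
  match a, b with
  | SLend, SLend | SBlank, SBlank | SSep, SSep | S0, S0 | S1, S1 => true
  | _, _ => false
  end.
Lemma sym_eqP : Equality.axiom sym_eqb.
Proof. by case; case; constructor. Qed.
HB.instance Definition _ := hasDecEq.Build sym sym_eqP.

Inductive mv := ML | MS | MR.

(* three tapes: 1 = receiving, 2 = internal, 3 = sending *)
Record dtm := DTM {
  nQ : nat;
  q_start : 'I_nQ; q_pause : 'I_nQ; q_stop : 'I_nQ;
  delta : 'I_nQ -> sym -> sym -> sym -> 'I_nQ * (sym * sym * sym) * (mv * mv * mv);
  start_pause : q_start != q_pause;
  start_stop : q_start != q_stop;
  pause_stop : q_pause != q_stop }.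

(* A tape is represented by the seq of its cells 1,2,...; cell 0 always holds
   the left-end marker, cells beyond the seq hold blanks. *)
Definition read (s : seq sym) (h : nat) : sym :=
  if h is h'.+1 then nth SBlank s h' else SLend.
Definition write (s : seq sym) (h : nat) (x : sym) : seq sym :=
  if h is h'.+1 then set_nth SBlank s h' x else s.
Definition movep (m : mv) (h : nat) : nat :=
  match m with ML => h.-1 | MS => h | MR => h.+1 end.

Record cfg (M : dtm) := Cfg {
  cq : 'I_(nQ M); t1 : seq sym; t2 : seq sym; t3 : seq sym;
  h1 : nat; h2 : nat; h3 : nat }.

Definition halted (M : dtm) (q : 'I_(nQ M)) : bool := (q == q_pause M) || (q == q_stop M).

Definition step (M : dtm) (c : cfg M) : cfg M :=
  if halted (cq c) then c else
  let: (q', (a1, a2, a3), (m1, m2, m3)) :=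
     delta (cq c) (read (t1 c) (h1 c)) (read (t2 c) (h2 c)) (read (t3 c) (h3 c)) in
  @Cfg M q' (write (t1 c) (h1 c) a1) (write (t2 c) (h2 c) a2) (write (t3 c) (h3 c) a3)
        (movep m1 (h1 c)) (movep m2 (h2 c)) (movep m3 (h3 c)).

Definition sym_of_bit (b : bool) : sym := if b then S1 else S0.
Definition bits_of (s : seq sym) : seq bool :=
  pmap (fun x => match x with S0 => Some false | S1 => Some true | _ => None end) s.

Definition pieces (s : seq sym) : seq (seq sym) :=
  foldr (fun x acc =>
           if x is SSep then [::] :: acc
           else match acc with [::] => [:: [:: x]] | p :: ps => (x :: p) :: ps end)
        [:: [::]] s.
(* i-th (0-based) #-separated bit string on a tape (empty if none) *)
Definition message (i : nat) (s : seq sym) : seq bool := bits_of (nth [::] (pieces s) i).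

(* length of the content of a tape (up to the last non-blank cell) *)
Definition content_len (s : seq sym) : nat := size s - find (fun x => x != SBlank) (rev s).

Definition snbrs (G : graph) (idf : 'I_(gn G) -> seq bool) (u : 'I_(gn G)) :
    seq 'I_(gn G) :=
  sort (fun v w => lexle (idf v) (idf w)) [seq v <- enum 'I_(gn G) | @gadj G u v].

(* node state between rounds: internal tape, stopped?, sending tape *)
Record nst := NSt { nit : seq sym; nstop : bool; nsend : seq sym }.

Definition recv (G : graph) (idf : 'I_(gn G) -> seq bool) (S : 'I_(gn G) -> nst)
    (u : 'I_(gn G)) : seq sym :=
  flatten [seq map sym_of_bit (message (index u (snbrs idf v)) (nsend (S v))) ++ [:: SSep]
          | v <- snbrs idf u].

(* The boolean says whether
   every running node reached pause or stop within its fuel. *)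
Definition round (M : dtm) (G : graph) (idf : 'I_(gn G) -> seq bool) (fuel : nat -> nat)
    (S : 'I_(gn G) -> nst) : ('I_(gn G) -> nst) * bool :=
  let res u :=
    if nstop (S u) then (NSt (nit (S u)) true [::], true) else
    let r := recv idf S u in
    let c0 := @Cfg M (q_start M) r (nit (S u)) [::] 0 0 0 in
    let c := iter (fuel (content_len r + content_len (nit (S u)))) (@step M) c0 in
    (NSt (t2 c) (cq c == q_stop M) (t3 c), halted (cq c)) in
  (fun u => (res u).1, [forall u, (res u).2]).

Definition init_state (G : graph) (idf kap : 'I_(gn G) -> seq bool) (u : 'I_(gn G)) : nst :=
  NSt (map sym_of_bit (@glab G u) ++ SSep :: map sym_of_bit (idf u) ++
       SSep :: map sym_of_bit (kap u)) false [::].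

Fixpoint exec (M : dtm) (G : graph) (idf kap : 'I_(gn G) -> seq bool) (fuel : nat -> nat)
    (R : nat) : ('I_(gn G) -> nst) * bool :=
  if R is R'.+1 then
    let SO := exec M idf kap fuel R' in
    let SO' := round M idf fuel SO.1 in
    (SO'.1, SO.2 && SO'.2)
  else (init_state idf kap, true).

Definition all_stopped (G : graph) (S : 'I_(gn G) -> nst) : bool := [forall u, nstop (S u)].

Definition accepts (M : dtm) (G : graph) (idf kap : 'I_(gn G) -> seq bool) : Prop :=
  exists R K : nat,
    let SO := exec M idf kap (fun _ => K) R in
    [&& SO.2, all_stopped SO.1 & [forall u, bits_of (nit (SO.1 u)) == [:: true]]].

Arguments accepts : clear implicits.

Definition local_polynomial (M : dtm) : Prop :=
  exists (c : nat) (q : seq nat),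
    forall (G : graph) (idf kap : 'I_(gn G) -> seq bool),
      locally_unique G 1 idf ->
      let SO := exec M idf kap (peval q) c in SO.2 && all_stopped SO.1.

Definition NLP (P : graph -> Prop) : Prop :=
  exists M : dtm, local_polynomial M /\
  exists (rid r : nat) (p : seq nat), 1 <= rid /\ 1 <= r /\
    forall (G : graph) (idf : 'I_(gn G) -> seq bool),
      locally_unique G rid idf ->
      (P G <-> exists kap : 'I_(gn G) -> seq bool,
                 bounded G idf r p kap /\ accepts M G idf kap).

(* Main.v *)
Require Import Defs.
From mathcomp Require Import all_boot zify.
Set Implicit Arguments. Unset Strict Implicit. Unset Printing Implicit Defensive.

Lemma snbrs_mem (G : graph) (idf : 'I_(gn G) -> seq bool) u v :
  (v \in snbrs idf u) = @gadj G u v.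
Proof. by rewrite /snbrs mem_sort mem_filter mem_enum andbT. Qed.

Lemma snbrs_uniq (G : graph) (idf : 'I_(gn G) -> seq bool) u : uniq (snbrs idf u).
Proof. by rewrite /snbrs sort_uniq filter_uniq ?enum_uniq. Qed.

Lemma index_map_in (T1 T2 : eqType) (f : T1 -> T2) (s : seq T1) x :
  {in s &, injective f} -> x \in s -> index (f x) (map f s) = index x s.
Proof.
elim: s => //= y s IH inj; rewrite inE => /orP [/eqP ->|xs]; first by rewrite !eqxx.
have inj' : {in s &, injective f} by move=> a b ha hb; apply: inj; rewrite inE ?ha ?hb orbT.
case: eqP => [e|]; last by case: eqP => [-> //|_ _]; rewrite IH.
have -> : x = y by apply: inj; rewrite ?inE ?xs ?eqxx ?orbT.
by rewrite eqxx.
Qed.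

Section Cover.
Variables (G H : graph) (pi : 'I_(gn H) -> 'I_(gn G)) (idG kG : 'I_(gn G) -> seq bool).
Let idH := fun j => idG (pi j).
Let kH := fun j => kG (pi j).
Hypothesis hlab : forall j, @glab H j = @glab G (pi j).
Hypothesis hhom : forall u v, @gadj H u v -> @gadj G (pi u) (pi v).
Hypothesis hlift : forall j w, @gadj G (pi j) w -> exists2 v, @gadj H j v & pi v = w.
Hypothesis hinj : forall j u v, @gadj H j u -> @gadj H j v -> pi u = pi v -> u = v.
Hypothesis hsurj : forall w, exists j, pi j = w.
Hypothesis htot : total (fun v w => lexle (idG v) (idG w)).
Hypothesis htr : transitive (fun v w => lexle (idG v) (idG w)).
Hypothesis hanti : antisymmetric (fun v w => lexle (idG v) (idG w)).

Lemma snbrs_map j : map pi (snbrs idH j) = snbrs idG (pi j).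
Proof.
rewrite /snbrs.
change (map pi (sort (relpre pi (fun v w => lexle (idG v) (idG w)))
   [seq v <- enum 'I_(gn H) | gadj j v]) =
   sort (fun v w => lexle (idG v) (idG w)) [seq v <- enum 'I_(gn G) | gadj (pi j) v]).
rewrite -sort_map; apply/perm_sortP => //; apply: uniq_perm.
- rewrite map_inj_in_uniq; first by rewrite filter_uniq // enum_uniq.
  move=> u v.
  by rewrite !mem_filter; move=> /andP[h1 _] /andP[h2 _]; exact: hinj h1 h2.
- by rewrite filter_uniq ?enum_uniq.
move=> w; rewrite mem_filter mem_enum andbT; apply/mapP/idP.
- by case=> v; rewrite mem_filter mem_enum andbT => /hhom h ->.
- by case/hlift=> v hv <-; exists v; rewrite // mem_filter mem_enum andbT.
Qed.

Lemma recv_cover (SH : 'I_(gn H) -> nst) (SG : 'I_(gn G) -> nst) j :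
  (forall j, SH j = SG (pi j)) -> recv idH SH j = recv idG SG (pi j).
Proof.
move=> hS; rewrite /recv -snbrs_map. rewrite -map_comp. congr flatten; apply/eq_in_map => v hv /=.
rewrite hS -snbrs_map index_map_in //.
- by move=> a b; rewrite !(snbrs_mem idH); exact: hinj.
- by rewrite (snbrs_mem idH) gadj_sym -(snbrs_mem idH).
Qed.

Lemma exec_cover M fuel R :
  (forall j, (exec M idH kH fuel R).1 j = (exec M idG kG fuel R).1 (pi j)) /\
  (exec M idH kH fuel R).2 = (exec M idG kG fuel R).2.
Proof.
elim: R => [|R [IH1 IH2]] /=.
  by split=> // j; rewrite /init_state hlab.
split.
  by move=> j; rewrite /round /= (recv_cover j IH1) IH1.
rewrite IH2; congr andb; rewrite /round /=.
apply/forallP/forallP => h x.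
- have [j <-] := hsurj x; by move: (h j); rewrite (recv_cover j IH1) IH1.
- by rewrite (recv_cover x IH1) IH1.
Qed.


Lemma within_lift r j w : within G r (pi j) w -> exists2 v, within H r j v & pi v = w.
Proof.
elim: r j => [|r IH] j /=; first by move=> /eqP <-; exists j.
case/orP => [/eqP <-|/existsP [w' /andP [a b]]]; first by exists j; rewrite ?eqxx.
have [v hv e] := hlift a; subst w'.
have [x hx <-] := IH v b.
by exists x => //; apply/orP; right; apply/existsP; exists v; rewrite hv hx.
Qed.

Lemma peval_mono p x y : x <= y -> peval p x <= peval p y.
Proof.
move=> hxy; elim: p => //= a p IH.
by rewrite leq_add2l; apply: leq_mul.
Qed.

Lemma bounded_cover r p : bounded G idG r p kG -> bounded H idH r p kH.
Proof.
move=> hb u; rewrite /kH; apply: leq_trans (hb (pi u)) _; apply: peval_mono.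
rewrite (partition_big pi predT) //=.
rewrite [X in _ <= X](bigID (fun w => within G r (pi u) w)) /=.
apply: leq_trans (leq_addr _ _); apply: leq_sum => w hw.
have [v hv hvw] := within_lift hw.
rewrite (bigD1 v) /=; last by rewrite hv hvw eqxx.
by rewrite /idH hlab hvw leq_addr.
Qed.

Lemma accepts_cover M : accepts M G idG kG -> accepts M H idH kH.
Proof.
case=> R [K h]; exists R, K; move: h.
have [h1 h2] := exec_cover M (fun _ => K) R.
rewrite /= h2 /all_stopped => /and3P [a b c]; rewrite a /=.
apply/andP; split; apply/forallP => j; rewrite h1.
- exact: (forallP b).
- exact: (forallP c).
Qed.

End Cover.

Definition adjN (N : nat) (u v : nat) : bool :=
  [|| v == u+1, v == u+2, v+N == u+1, v+N == u+2, u == v+1, u == v+2, u+N == v+1 | u+N == v+2].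

Lemma adjN_sym N u v : adjN N u v = adjN N v u.
Proof. rewrite /adjN. apply/idP/idP; lia. Qed.

Lemma adjN_irr N u : 2 < N -> adjN N u u = false.
Proof. rewrite /adjN => h. apply/negbTE. lia. Qed.

Section Ring.
Variables (N : nat) (hN : 2 < N).

Definition radj : rel 'I_N := fun u v => adjN N u v.

Lemma radj_sym : symmetric radj.
Proof. by move=> u v; rewrite /radj adjN_sym. Qed.

Lemma radj_irr : irreflexive radj.
Proof. by move=> u; rewrite /radj adjN_irr. Qed.

Lemma N_pos : 0 < N. Proof. lia. Qed.

Lemma radj_conn u v : connect radj u v.
Proof.
pose o0 : 'I_N := Ordinal N_pos.
have h0 : forall m (x : 'I_N), val x = m -> connect radj o0 x.
  elim=> [|m IH] x; rewrite /= => hx.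
    by have -> : x = o0 by apply: val_inj.
  have hm : m < N by have := ltn_ord x; lia.
  apply: connect_trans (IH (Ordinal hm) erefl) (connect1 _).
  rewrite /radj /adjN /=; lia.
apply: connect_trans (_ : connect radj u o0) (h0 _ v erefl).
by rewrite (sym_connect_sym radj_sym) (h0 _ u erefl).
Qed.

Definition ring : graph :=
  @Graph N radj (fun _ => [::]) N_pos radj_sym radj_irr radj_conn.

End Ring.

Definition piN (n j : nat) : nat :=
  if j < n then j else if j < n.*2 then j - n else j - n.*2.

Lemma piN_cases n j : j < 3 * n ->
  [\/ j < n /\ piN n j = j, n <= j < 2 * n /\ piN n j = j - n
    | 2 * n <= j /\ piN n j = j - 2 * n].
Proof.
rewrite /piN -mul2n => hj.
case: ifP => h1; first by constructor 1.
case: ifP => h2; first by constructor 2; split => //; lia.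
by constructor 3; split => //; lia.
Qed.

Lemma piN_eq n x w : x < 3 * n -> w < n ->
  (piN n x = w <-> (x = w \/ x = w + n \/ x = w + 2 * n)).
Proof.
move=> hx hw; case: (piN_cases hx) => [[a ->]|[a ->]|[a ->]]; split; lia.
Qed.

Lemma liftN n j w : 4 < n -> j < 3 * n -> w < n -> adjN n (piN n j) w ->
  exists v, v < 3 * n /\ adjN (3 * n) j v /\ piN n v = w.
Proof.
move=> hn hj hw hadj.
suff [v [a [b c]]] : exists v, v < 3 * n /\ adjN (3 * n) j v /\
    (v = w \/ v = w + n \/ v = w + 2 * n).
  by exists v; split => //; split => //; apply/piN_eq.
move: hadj; case: (piN_cases hj) => [[? ->]|[? ->]|[? ->]].
all: rewrite /adjN.
all: move=> /orP[/eqP h|/orP[/eqP h|/orP[/eqP h|/orP[/eqP h|/orP[/eqP h|/orP[/eqP h|/orP[/eqP h|/eqP h]]]]]]].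
all: first [ exists (j+1); lia | exists (j+2); lia | exists (j+1-3*n); lia
        | exists (j+2-3*n); lia | exists (j-1); lia | exists (j-2); lia
        | exists (j+3*n-1); lia | exists (j+3*n-2); lia ].
Qed.

Section Cov.
Variables (n : nat) (hn : 4 < n).
Lemma hn2 : 2 < n. Proof. lia. Qed.
Lemma hn3 : 2 < 3 * n. Proof. lia. Qed.
Definition G := ring hn2.
Definition H := ring hn3.

Lemma piN_lt (j : 'I_(3 * n)) : piN n j < n.
Proof. have := ltn_ord j. case: (piN_cases (ltn_ord j)) => [[? ->]|[? ->]|[? ->]]; lia. Qed.

Definition pi (j : 'I_(gn H)) : 'I_(gn G) := Ordinal (piN_lt j).

Lemma pi_hom u v : @gadj H u v -> @gadj G (pi u) (pi v).
Proof.
case: u => u hu; case: v => v hv.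
have hu' : u < 3 * n := hu; have hv' : v < 3 * n := hv.
rewrite /= /radj /adjN /=.
case: (piN_cases hu) => [[? ->]|[? ->]|[? ->]];
case: (piN_cases hv) => [[? ->]|[? ->]|[? ->]]; lia.
Qed.

Lemma pi_surj w : exists j, pi j = w.
Proof.
case: w => w hw0; have hw1 : w < n := hw0.
have hw : w < 3 * n by lia.
exists (Ordinal hw); apply: val_inj => /=.
by case: (piN_cases hw) => [[? ->]|[? ->]|[? ->]] //=; lia.
Qed.

Lemma pi_inj j u v : @gadj H j u -> @gadj H j v -> pi u = pi v -> u = v.
Proof.
case: j => j hj; case: u => u hu; case: v => v hv.
have hj' : j < 3 * n := hj; have hu' : u < 3 * n := hu; have hv' : v < 3 * n := hv.
move=> a b /(congr1 val) /= e; apply: val_inj => /=; move: a b e.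
rewrite /= /radj /adjN /=.
case: (piN_cases hu) => [[? ->]|[? ->]|[? ->]];
case: (piN_cases hv) => [[? ->]|[? ->]|[? ->]]; lia.
Qed.


Lemma pi_lift j w : @gadj G (pi j) w -> exists2 v, @gadj H j v & pi v = w.
Proof.
case: j => j hj; case: w => w hw.
have hj' : j < 3 * n := hj; have hw' : w < n := hw.
rewrite /= /radj /= => hadj.
have [v [a [b c]]] := liftN hn hj' hw' hadj.
by exists (Ordinal a) => //; apply: val_inj.
Qed.

Lemma H_col : three_colorable H.
Proof.
exists (fun j => Ordinal (ltn_pmod j (isT : 0 < 3))) => u v.
case: u => u hu; case: v => v hv.
have hu' : u < 3 * n := hu; have hv' : v < 3 * n := hv.
rewrite /= /radj /adjN /= => h; apply/eqP => /(congr1 val) /=; lia.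
Qed.

Lemma G_noncol : n %% 3 = 1 -> ~ three_colorable G.
Proof.
move=> h3 [f hf].
have n0 : 0 < n by lia.
pose o0 : 'I_n := Ordinal n0.
pose g i := val (f (insubd o0 i)).
have g3 i : g i < 3 by apply: ltn_ord.
have gadj u v : u < n -> v < n -> adjN n u v -> g u != g v.
  move=> hu hv huv; rewrite /g; apply/eqP => /val_inj e; move: (hf (insubd o0 u) (insubd o0 v)).
  by rewrite /= /radj !val_insubd hu hv huv e eqxx => /(_ isT).
have step i : i + 3 < n -> g (i + 3) = g i.
  move=> hi.
  have a1 := gadj i (i+1); have a2 := gadj i (i+2); have a3 := gadj (i+1) (i+2).
  have a4 := gadj (i+1) (i+3); have a5 := gadj (i+2) (i+3).
  have := g3 i; have := g3 (i+1); have := g3 (i+2); have := g3 (i+3).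
  rewrite /adjN in a1 a2 a3 a4 a5.
  have e1 : i + 1 + 1 = i + 2 by lia.
  have e2 : i + 1 + 2 = i + 3 by lia.
  have e3 : i + 2 + 1 = i + 3 by lia.
  move: a1 a2 a3 a4 a5; rewrite e1 e2 e3 !eqxx /= !orbT.
  move=> /(_ ltac:(lia) ltac:(lia) isT) a1 /(_ ltac:(lia) ltac:(lia) isT) a2
    /(_ ltac:(lia) ltac:(lia) isT) a3 /(_ ltac:(lia) ltac:(lia) isT) a4
    /(_ ltac:(lia) ltac:(lia) isT) a5.
  lia.
have all3 m : 3 * m < n -> g (3 * m) = g 0.
  elim: m => [//|m IH] hm.
  have -> : 3 * m.+1 = 3 * m + 3 by lia.
  rewrite step; last by lia.
  by apply: IH; lia.
have k3 : 3 * (n %/ 3) = n - 1 by have := divn_eq n 3; lia.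
have := all3 (n %/ 3); rewrite k3 => /(_ ltac:(lia)) e.
have := gadj (n - 1) 0 ltac:(lia) n0.
rewrite e eqxx /adjN => /(_ _)/negP; apply; lia.
Qed.

End Cov.


Definition closeN N K u v :=
  [|| (u <= v + K) && (v <= u + K), u + N <= v + K | v + N <= u + K].

Lemma closeN_step N K u w v : u < N -> v < N -> w < N -> adjN N u w ->
  closeN N K w v -> closeN N K.+2 u v.
Proof. rewrite /closeN /adjN; lia. Qed.

Lemma within_close N (hN : 2 < N) K (u v : 'I_(gn (ring hN))) :
  within (ring hN) K u v -> closeN N (2 * K) u v.
Proof.
elim: K u => [|K IH] u /=; first by move=> /eqP ->; rewrite /closeN !leq_addr.
have hu : (u : nat) < N := ltn_ord u; have hv : (v : nat) < N := ltn_ord v.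
case/orP => [/eqP ->|/existsP [w /andP [a b]]].
  by rewrite /closeN !leq_addr.
have hw : (w : nat) < N := ltn_ord w.
have -> : 2 * K.+1 = (2 * K).+2 by lia.
exact: (closeN_step hu hv hw a (IH w b)).
Qed.

Definition idG n (w : 'I_n) : seq bool := nseq w true.

Lemma lexle_nseq a b : lexle (nseq a true) (nseq b true) = (a <= b).
Proof. by elim: a b => [|a IH] [|b] //=; rewrite IH. Qed.

Lemma idG_tot n : total (fun v w : 'I_n => lexle (idG v) (idG w)).
Proof. by move=> v w; rewrite /idG !lexle_nseq leq_total. Qed.

Lemma idG_tr n : transitive (fun v w : 'I_n => lexle (idG v) (idG w)).
Proof. by move=> v u w; rewrite /idG !lexle_nseq; apply: leq_trans. Qed.

Lemma idG_anti n : antisymmetric (fun v w : 'I_n => lexle (idG v) (idG w)).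
Proof. by move=> v w; rewrite /idG !lexle_nseq => h; apply: val_inj; apply: anti_leq. Qed.

Lemma idG_lu (G : graph) r : locally_unique G r (@idG (gn G)).
Proof.
move=> u v neq _; apply: contra neq => /eqP /(congr1 size).
by rewrite !size_nseq => e; apply/eqP/val_inj.
Qed.

Lemma H_lu n (hn : 4 < n) rid : 4 * rid < n ->
  locally_unique (H hn) rid (fun j => idG (pi j)).
Proof.
move=> hr u v neq /within_close c; apply: contra neq => /eqP /(congr1 size).
rewrite !size_nseq /= => e; apply/eqP/val_inj.
move: c e; case: u => u hu; case: v => v hv /=.
have hu' : u < 3 * n := hu; have hv' : v < 3 * n := hv.
rewrite /closeN.
case: (piN_cases hu') => [[? ->]|[? ->]|[? ->]];
case: (piN_cases hv') => [[? ->]|[? ->]|[? ->]]; lia.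
Qed.

Theorem corollary9p5 : ~ NLP (fun G : graph => ~ three_colorable G).
Proof.
case=> M [_ [rid [r [p [hrid [hr hP]]]]]].
pose n := (3 * (2 * rid + 2)).+1.
have hn : 4 < n by rewrite /n; lia.
have hlab : forall j : 'I_(gn (H hn)), @glab (H hn) j = @glab (G hn) (pi j) by [].
have [hG _] := hP (G hn) (@idG _) (@idG_lu (G hn) rid).
have [kap [hb ha]] := hG (@G_noncol n hn ltac:(rewrite /n; lia)).
have [_ hH] := hP (H hn) (fun j => idG (pi j)) (@H_lu n hn rid ltac:(rewrite /n; lia)).
apply: (hH _) (H_col hn).
exists (fun j => kap (pi j)); split.
- exact: (bounded_cover hlab (@pi_lift _ hn) hb).
- exact: (accepts_cover hlab (@pi_hom _ hn) (@pi_lift _ hn) (@pi_inj _ hn)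
     (@pi_surj _ hn) (@idG_tot _) (@idG_tr _) (@idG_anti _) ha).
Qed.
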